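(* Let $\mathbf{A},\mathbf{B}\in\mathbb{C}$ be constants and let $\vartheta_2,\vartheta_3,\vartheta_4,\eta$ be (nonvanishing $\vartheta_2$) solutions of $$\frac{d\vartheta_2}{d\tau}=\frac{i}{\pi}\Big\{\eta+\frac{\pi^2}{12}(\vartheta_3^4+\vartheta_4^4)\Big\}\vartheta_2,\quad \frac{d\vartheta_3}{d\tau}=\frac{i}{\pi}\Big\{\eta+\frac{\pi^2}{12}(\vartheta_3^4+\vartheta_4^4-3\mathbf{B}^4\vartheta_4^4)\Big\}\vartheta_3,$$ $$\frac{d\vartheta_4}{d\tau}=\frac{i}{\pi}\Big\{\eta+\frac{\pi^2}{12}(\vartheta_3^4+\vartheta_4^4-3\mathbf{A}^4\vartheta_3^4)\Big\}\vartheta_4,\quad \frac{d\eta}{d\tau}=\frac{i}{\pi}2\eta^2-\frac{\pi^3}{72}i\big\{\vartheta_3^8+(9\mathbf{A}^4\mathbf{B}^4-6\mathbf{A}^4-6\mathbf{B}^4+2)\vartheta_3^4\vartheta_4^4+\vartheta_4^8\big\}.$$ Then the quantity $\mathfrak{A}^4$ defined by $\mathfrak{A}^4\vartheta_2^4=\mathbf{A}^4\vartheta_3^4-\mathbf{B}^4\vartheta_4^4$ satisfies $\frac{d}{d\tau}\mathfrak{A}^4\equiv0$, i.e. it is a rational first integral of this system. *)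

(* Defs.v *)
From Stdlib Require Import Reals.
From Coquelicot Require Import Coquelicot.
Open Scope C_scope.

Definition Cderiv_is (f : C -> C) (z l : C) : Prop :=
  @is_derive C_AbsRing C_NormedModule f z l.

Definition piC : C := RtoC PI.

Definition frakA4 (A B : C) (th2 th3 th4 : C -> C) (t : C) : C :=
  (A ^ 4 * th3 t ^ 4 - B ^ 4 * th4 t ^ 4) / th2 t ^ 4.

(* Main.v *)
From Stdlib Require Import Reals Lra.
Require Import Defs.
From Coquelicot Require Import Coquelicot.
Open Scope C_scope.

Lemma Cinv_deriv (z0 : C) : z0 <> 0 ->
  @is_derive C_AbsRing (AbsRing_NormedModule C_AbsRing) Cinv z0 (- / (z0*z0)).
Proof.
  intros Hz. split. apply is_linear_scal_l.
  intros x Hx. pose proof (@is_filter_lim_locally_unique _ (AbsRing_NormedModule C_AbsRing) z0 x Hx) as Ex. subst x.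
  intros eps. apply (@locally_le_locally_norm C_AbsRing (AbsRing_NormedModule C_AbsRing)).
  assert (Hr : (0 < Cmod z0)%R) by (apply Cmod_gt_0; auto).
  assert (Hd : (0 < Rmin (Cmod z0 / 2) (eps * Cmod z0 * Cmod z0 * Cmod z0 / 2))%R).
  { apply Rmin_glb_lt. lra. pose proof (cond_pos eps). apply Rmult_lt_0_compat; [|lra].
    repeat apply Rmult_lt_0_compat; auto. }
  exists (mkposreal _ Hd). intros y Hy. unfold ball_norm in Hy. simpl in Hy.
  change (Cmod (y - z0) < Rmin (Cmod z0 / 2) (eps * Cmod z0 * Cmod z0 * Cmod z0 / 2))%R in Hy.
  change (Cmod ((/ y - / z0) - (y - z0) * (- / (z0 * z0))) <= eps * Cmod (y - z0))%R.
  assert (Hy1 : (Cmod z0 / 2 <= Cmod y)%R).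
  { assert (Cmod z0 <= Cmod y + Cmod (z0 - y))%R.
    { replace z0 with (y + (z0 - y)) at 1 by ring. apply Cmod_triangle. }
    replace (z0 - y) with (- (y - z0)) in H by ring. rewrite Cmod_opp in H.
    pose proof (Rmin_l (Cmod z0 / 2) (eps * Cmod z0 * Cmod z0 * Cmod z0 / 2)). lra. }
  assert (Hy0 : (y:C) <> 0).
  { intro E. subst. rewrite Cmod_0 in Hy1. lra. }
  replace ((/ y - / z0) - (y - z0) * (- / (z0 * z0))) with
    ((y - z0) * (y - z0) * (/ y * / (z0 * z0))) by (field; auto).
  rewrite !Cmod_mult, !Cmod_inv, Cmod_mult; auto.
  2:{ intro E. apply (f_equal Cmod) in E. rewrite Cmod_mult, Cmod_0 in E. nra. }
  set (a := Cmod (y - z0)) in *. set (r := Cmod z0) in *. set (m := Cmod y) in *.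
  assert (0 <= a)%R by apply Cmod_ge_0.
  pose proof (Rmin_r (r / 2) (eps * r * r * r / 2)).
  assert (a <= eps * r * r * r / 2)%R by lra.
  assert (Hm : (0 < m)%R) by lra.
  replace (a * a * (/ m * / (r * r)))%R with ((a / m / (r*r)) * a)%R by (field; lra).
  apply Rmult_le_compat_r; auto.
  apply (Rmult_le_reg_r (m * (r*r))). apply Rmult_lt_0_compat; nra.
  replace (a / m / (r * r) * (m * (r * r)))%R with a by (field; lra).
  nra.
Qed.

Definition CD (f : C -> C) (z l : C) := @is_derive C_AbsRing (AbsRing_NormedModule C_AbsRing) f z l.
Lemma tr f t l : Cderiv_is f t l -> CD f t l.
Proof. intros [H1 H2]. split. apply is_linear_scal_l. exact H2. Qed.
Lemma tr2 f t l : CD f t l -> Cderiv_is f t l.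
Proof. intros [H1 H2]. split. apply is_linear_scal_l. exact H2. Qed.

Lemma CD_mult f g t df dg : CD f t df -> CD g t dg ->
  CD (fun x => f x * g x) t (df * g t + f t * dg).
Proof. intros Hf Hg. apply (@is_derive_mult C_AbsRing f g t df dg Hf Hg). apply Cmult_comm. Qed.

Lemma CD_const (c t : C) : CD (fun _ => c) t 0.
Proof. apply (@is_derive_const C_AbsRing (AbsRing_NormedModule C_AbsRing)). Qed.

Lemma CD_minus f g t df dg : CD f t df -> CD g t dg ->
  CD (fun x => f x - g x) t (df - dg).
Proof. intros Hf Hg. apply (@is_derive_minus C_AbsRing (AbsRing_NormedModule C_AbsRing) f g t df dg Hf Hg). Qed.

Lemma CD_ext f g t l : (forall x, f x = g x) -> CD f t l -> CD g t l.
Proof. intros H Hf. apply (@is_derive_ext C_AbsRing (AbsRing_NormedModule C_AbsRing) f g t l H Hf). Qed.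

Lemma CD_val f t l l' : l = l' -> CD f t l -> CD f t l'.
Proof. intros ->; auto. Qed.

Lemma CD_pow4 f t df : CD f t df ->
  CD (fun x => f x ^ 4) t (df * f t ^ 3 + df * f t ^ 3 + df * f t ^ 3 + df * f t ^ 3).
Proof.
  intros H.
  pose proof (CD_mult _ _ _ _ _ H (CD_mult _ _ _ _ _ H (CD_mult _ _ _ _ _ H
     (CD_mult _ _ _ _ _ H (CD_const 1 t))))) as H1.
  eapply CD_ext; [| eapply CD_val; [| exact H1]].
  - intros x. simpl. reflexivity.
  - simpl. ring.
Qed.

Lemma CD_inv (g : C -> C) (t dg : C) : g t <> 0 -> CD g t dg -> CD (fun x => / g x) t (dg * - / (g t * g t)).
Proof.
  intros Hn H. apply (@is_derive_comp C_AbsRing (AbsRing_NormedModule C_AbsRing) Cinv g t _ dg).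
  apply Cinv_deriv; auto. exact H.
Qed.

Theorem theorem7p2 (A B : C) (D : C -> Prop) (HD : open D)
  (th2 th3 th4 eta : C -> C)
  (Hth2 : forall t, D t -> th2 t <> 0)
  (H2 : forall t, D t -> Cderiv_is th2 t
     ((Ci / piC) * (eta t + piC ^ 2 / RtoC 12 * (th3 t ^ 4 + th4 t ^ 4)) * th2 t))
  (H3 : forall t, D t -> Cderiv_is th3 t
     ((Ci / piC) * (eta t + piC ^ 2 / RtoC 12 *
        (th3 t ^ 4 + th4 t ^ 4 - RtoC 3 * B ^ 4 * th4 t ^ 4)) * th3 t))
  (H4 : forall t, D t -> Cderiv_is th4 t
     ((Ci / piC) * (eta t + piC ^ 2 / RtoC 12 *
        (th3 t ^ 4 + th4 t ^ 4 - RtoC 3 * A ^ 4 * th3 t ^ 4)) * th4 t))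
  (Heta : forall t, D t -> Cderiv_is eta t
     ((Ci / piC) * RtoC 2 * eta t ^ 2
      - piC ^ 3 / RtoC 72 * Ci *
        (th3 t ^ 8
         + (RtoC 9 * A ^ 4 * B ^ 4 - RtoC 6 * A ^ 4 - RtoC 6 * B ^ 4 + RtoC 2)
             * th3 t ^ 4 * th4 t ^ 4
         + th4 t ^ 8))) :
  forall t, D t -> Cderiv_is (frakA4 A B th2 th3 th4) t 0.
Proof.
  intros t Ht. apply tr2.
  assert (Hp : th2 t ^ 4 <> 0).
  { intro E. apply (f_equal Cmod) in E. simpl in E. apply (Rlt_irrefl 0%R).
    rewrite !Cmod_mult, Cmod_1, Cmod_0 in E. pose proof (proj1 (Cmod_gt_0 _) (Hth2 t Ht)) as Hc. rewrite <- E at 2. repeat apply Rmult_lt_0_compat; lra. }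
  assert (Hpi : piC <> 0).
  { unfold piC. intro E. apply (f_equal fst) in E. simpl in E. pose proof PI_RGT_0. lra. }
  assert (H12 : RtoC 12 <> 0).
  { intro E. apply (f_equal fst) in E. simpl in E. lra. }
  pose proof (CD_minus _ _ _ _ _
     (CD_mult _ _ _ _ _ (CD_const (A^4) t) (CD_pow4 _ _ _ (tr _ _ _ (H3 t Ht))))
     (CD_mult _ _ _ _ _ (CD_const (B^4) t) (CD_pow4 _ _ _ (tr _ _ _ (H4 t Ht))))) as dN.
  pose proof (CD_inv (fun x => th2 x ^ 4) t _ Hp (CD_pow4 _ _ _ (tr _ _ _ (H2 t Ht)))) as dI.
  pose proof (CD_mult _ _ _ _ _ dN dI) as dF.
  eapply CD_ext; [| eapply CD_val; [| exact dF]].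
  - intros x. unfold frakA4, Cdiv. reflexivity.
  - simpl. field. auto.
Qed.
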